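(* Fix $r>0$ and let $s(\ell)=\sinh^3\ell$, $s^{(-1)}$ its primitive vanishing at $0$ and $s^{(-2)}$ the primitive of $s^{(-1)}$ vanishing at $0$. Define, for $\ell\in[0,+\infty)$ and $\alpha,\beta\in[0,\pi/2)$, \[g(\ell,\alpha,\beta) =\frac43 \ell - \frac{s(\ell)}{9\tanh^2(r) \cos\alpha\cos\beta} +\frac{s^{(-1)}(\ell)}{3\tanh r}\left(\frac1{\cos\alpha}+\frac1{\cos\beta}\right) -s^{(-2)}(\ell),\] and $f(\alpha,\beta)=\sup_\ell g(\ell,\alpha,\beta)$. Then: (1) for each fixed $\alpha$, the maximum of $\ell\mapsto g(\ell,\alpha,\alpha)$ is attained at $\ell=2\operatorname{arctanh}(\tanh r\cos\alpha)$ and only there; (2) for all $\alpha,\beta$, $f(\alpha,\beta)\le \frac12\left(f(\alpha,\alpha)+f(\beta,\beta)\right)$, with equality only for $\alpha=\beta$. *)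

(* Defs.v *)
From Stdlib Require Import Reals.
From Coquelicot Require Import Coquelicot.
Open Scope R_scope.

Definition artanh (x : R) : R := / 2 * ln ((1 + x) / (1 - x)).

Definition s (l : R) : R := (sinh l) ^ 3.
Definition s_m1 (l : R) : R := RInt s 0 l.
Definition s_m2 (l : R) : R := RInt s_m1 0 l.

Definition gfun (r l a b : R) : R :=
  4 / 3 * l - s l / (9 * (tanh r) ^ 2 * cos a * cos b)
  + s_m1 l / (3 * tanh r) * (/ cos a + / cos b)
  - s_m2 l.

(* fsup r a b = f(a,b) = sup_{l >= 0} g(l,a,b) (finite, as the sup is attained) *)
Definition fsup (r a b : R) : R :=
  real (Lub_Rbar (fun y => exists l, 0 <= l /\ y = gfun r l a b)).

(* Main.v *)
Require Import Defs.
From Stdlib Require Import Reals Lra Psatz.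
From Coquelicot Require Import Coquelicot.
Open Scope R_scope.

Definition S1 l := cosh l ^3/3 - cosh l + 2/3.
Definition S2 l := sinh l ^3/9 - 2*sinh l/3 + 2*l/3.

Lemma cont_s x : continuous s x.
Proof. apply (@ex_derive_continuous R_AbsRing R_NormedModule s x). unfold s, sinh. auto_derive. auto. Qed.

Lemma s_m1_eq l : s_m1 l = S1 l.
Proof.
unfold s_m1. apply is_RInt_unique.
replace (S1 l) with (S1 l - S1 0).
2:{ unfold S1. rewrite cosh_0. field. }
apply (@is_RInt_derive R_CompleteNormedModule S1 s 0 l).
- intros x _. unfold S1, cosh, s, sinh. auto_derive. auto.
  rewrite exp_Ropp. field. apply Rgt_not_eq, exp_pos.
- intros x _. apply cont_s.
Qed.
Lemma cont_S1 x : continuous S1 x.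
Proof. apply (@ex_derive_continuous R_AbsRing R_NormedModule S1 x). unfold S1, cosh. auto_derive. auto. Qed.

Lemma s_m2_eq l : s_m2 l = S2 l.
Proof.
unfold s_m2. rewrite (RInt_ext s_m1 S1) by (intros; apply s_m1_eq).
apply is_RInt_unique.
replace (S2 l) with (S2 l - S2 0).
2:{ unfold S2. replace (sinh 0) with 0 by (unfold sinh; rewrite Ropp_0; field). field. }
apply (@is_RInt_derive R_CompleteNormedModule S2 S1 0 l).
- intros x _. unfold S2, S1, cosh, sinh. auto_derive. auto.
  rewrite exp_Ropp. field. apply Rgt_not_eq, exp_pos.
- intros x _. apply cont_S1.
Qed.

Definition Gp l p q := 4/3*l - s l * p * q / 9 + S1 l * (p+q)/3 - S2 l.
Definition H l u v := Gp l (1+2*u) (1+2*v).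
Definition C1 l := sinh l^3 - (cosh l^3 - 3 * cosh l + 2).
Definition K0 l := 6*l + 6*sinh l - 2*sinh l^3 + 2*(cosh l^3 - 3 * cosh l + 2).

Lemma H_form l u v : 9 * H l u v = K0 l - 2*(u+v)*C1 l - 4*u*v*s l.
Proof. unfold H, Gp, K0, C1, s, S1, S2. field. Qed.

Lemma C1_nonneg l : 0 <= l -> 0 <= C1 l.
Proof.
intros hl. assert (hE : 1 <= exp l).
{ rewrite <- exp_0. destruct hl as [hl|hl]. left; apply exp_increasing; auto. subst; right; reflexivity. }
assert (C1 l = (exp l - 1)^3 * (6 * exp l + 2) / (8 * exp l ^ 3)).
{ unfold C1, sinh, cosh. rewrite exp_Ropp. field. lra. }
rewrite H0. apply Rmult_le_pos. apply Rmult_le_pos. apply pow_le; lra. lra.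
apply Rlt_le, Rinv_0_lt_compat. apply Rmult_lt_0_compat. lra. apply pow_lt; lra.
Qed.

Lemma H_amgm l u v : 0 <= l -> 0 < u -> 0 < v ->
  H l u v <= H l (sqrt (u*v)) (sqrt (u*v)).
Proof.
intros hl hu hv.
assert (h9: 9 * H l u v <= 9 * H l (sqrt (u*v)) (sqrt (u*v))).
{ rewrite !H_form. rewrite sqrt_mult by lra.
  pose proof (sqrt_sqrt u ltac:(lra)). pose proof (sqrt_sqrt v ltac:(lra)).
  pose proof (C1_nonneg l hl).
  set (a := sqrt u) in *. set (b := sqrt v) in *. clearbody a b.
  rewrite <- H0, <- H1.
  assert (0 <= (a - b)^2) by (apply pow2_ge_0).
  nra. }
lra.
Qed.
Definition dH k l := (1 + cosh l) * (2 - k^2 * (exp l - 1)^2 - (k+1)^2 * (1 - / exp l)^2) / 3.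

Lemma H_derive k l : is_derive (fun l => H l k k) l (dH k l).
Proof.
unfold H, Gp, s, S1, S2, dH, sinh, cosh. auto_derive. auto.
rewrite exp_Ropp. field. apply Rgt_not_eq, exp_pos.
Qed.
Lemma dH_pos k l : 0 < k -> 0 <= l -> exp l < 1 + / k -> 0 < dH k l.
Proof.
intros hk hl hE.
assert (h1 : 1 <= exp l).
{ rewrite <- exp_0. destruct hl as [hl|hl]. left; apply exp_increasing; auto. subst; right; reflexivity. }
set (E := exp l) in *.
assert (hc : 0 < 1 + cosh l).
{ unfold cosh. pose proof (exp_pos l); pose proof (exp_pos (-l)). lra. }
unfold dH. fold E. apply Rmult_lt_0_compat; [|lra]. apply Rmult_lt_0_compat; [lra|].
assert (a1 : k * (E - 1) < 1).
{ apply (Rmult_lt_compat_l k) in hE; auto. rewrite Rmult_plus_distr_l, Rinv_r in hE by lra. lra. }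
assert (a2 : (k+1) * (1 - / E) < 1).
{ assert (hEE : /E * E = 1) by (field; lra).
  assert (k * E < k + 1) by nra.
  assert ((k+1) * / E > k).
  { apply (Rmult_lt_reg_r E). lra. rewrite Rmult_assoc, hEE. lra. }
  nra. }
assert (0 <= k * (E - 1)) by (apply Rmult_le_pos; lra).
assert (0 <= (k+1) * (1 - / E)).
{ apply Rmult_le_pos. lra. assert (/E <= 1). { rewrite <- Rinv_1. apply Rinv_le_contravar; lra. } lra. }
replace (k^2 * (E-1)^2) with ((k * (E - 1))^2) by ring.
replace ((k+1)^2 * (1 - /E)^2) with (((k+1) * (1 - /E))^2) by ring.
nra.
Qed.

Lemma dH_neg k l : 0 < k -> 1 + / k < exp l -> dH k l < 0.
Proof.
intros hk hE.
set (E := exp l) in *.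
assert (hk' : 0 < / k) by (apply Rinv_0_lt_compat; lra).
assert (hc : 0 < 1 + cosh l).
{ unfold cosh. pose proof (exp_pos l); pose proof (exp_pos (-l)). lra. }
unfold dH. fold E.
assert (hX : 2 - k ^ 2 * (E - 1) ^ 2 - (k + 1) ^ 2 * (1 - / E) ^ 2 < 0).
{
assert (a1 : k * (E - 1) > 1).
{ apply (Rmult_lt_compat_l k) in hE; auto. rewrite Rmult_plus_distr_l, Rinv_r in hE by lra. lra. }
assert (hE0 : 0 < E) by lra.
assert (a2 : (k+1) * (1 - / E) > 1).
{ assert (hEE : /E * E = 1) by (field; lra).
  assert (k * E > k + 1) by nra.
  assert ((k+1) * / E < k).
  { apply (Rmult_lt_reg_r E). lra. rewrite Rmult_assoc, hEE. lra. }
  nra. }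
replace (k^2 * (E-1)^2) with ((k * (E - 1))^2) by ring.
replace ((k+1)^2 * (1 - /E)^2) with (((k+1) * (1 - /E))^2) by ring.
nra. }
unfold Rdiv. nra.
Qed.

Lemma dH_zero k : 0 < k -> dH k (ln (1 + / k)) = 0.
Proof.
intros hk. unfold dH. rewrite exp_ln. field. lra.
assert (0 < / k) by (apply Rinv_0_lt_compat; lra). lra.
Qed.
Lemma strict_max (h dh : R -> R) (a l0 : R) :
  (forall x, is_derive h x (dh x)) ->
  (forall x, a <= x < l0 -> 0 < dh x) ->
  (forall x, l0 < x -> dh x < 0) -> dh l0 = 0 ->
  forall l, a <= l -> l <> l0 -> h l < h l0.
Proof.
intros hd hp hn hz l hl hne.
assert (hc : forall x, continuity_pt h x).
{ intros x. apply continuity_pt_filterlim.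
  apply (@ex_derive_continuous R_AbsRing R_NormedModule h x). exists (dh x). apply hd. }
assert (mvt : forall u v, u < v -> exists c, u <= c <= v /\ h v - h u = dh c * (v - u)).
{ intros u v huv. destruct (MVT_gen h u v dh) as [c [hc1 hc2]].
  - intros x _. apply hd.
  - intros x _. apply hc.
  - exists c. rewrite Rmin_left, Rmax_right in hc1 by lra. split; auto. }
destruct (Rtotal_order l l0) as [hlt|[heq|hgt]]; [|contradiction|].
- set (m := (l + l0)/2).
  destruct (mvt l m) as [c1 [hc1 e1]]. unfold m; lra.
  destruct (mvt m l0) as [c2 [hc2 e2]]. unfold m; lra.
  assert (0 < dh c1) by (apply hp; unfold m in *; lra).
  assert (0 <= dh c2).
  { destruct (Req_dec c2 l0) as [->|ne]. lra. left; apply hp; unfold m in *; lra. }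
  assert (0 < dh c1 * (m - l)) by (apply Rmult_lt_0_compat; unfold m in *; lra).
  assert (0 <= dh c2 * (l0 - m)) by (apply Rmult_le_pos; unfold m in *; lra).
  lra.
- set (m := (l + l0)/2).
  destruct (mvt l0 m) as [c1 [hc1 e1]]. unfold m; lra.
  destruct (mvt m l) as [c2 [hc2 e2]]. unfold m; lra.
  assert (dh c2 < 0) by (apply hn; unfold m in *; lra).
  assert (dh c1 <= 0).
  { destruct (Req_dec c1 l0) as [->|ne]. lra. left; apply hn; unfold m in *; lra. }
  assert (dh c2 * (l - m) < 0).
  { assert (0 < - dh c2 * (l - m)) by (apply Rmult_lt_0_compat; unfold m in *; lra). lra. }
  assert (dh c1 * (m - l0) <= 0).
  { assert (0 <= - dh c1 * (m - l0)) by (apply Rmult_le_pos; unfold m in *; lra). lra. }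
  lra.
Qed.

Lemma l0_pos k : 0 < k -> 0 < ln (1 + / k).
Proof. intros hk. rewrite <- ln_1. apply ln_increasing. lra.
assert (0 < / k) by (apply Rinv_0_lt_compat; lra). lra. Qed.

Lemma H_max k l : 0 < k -> 0 <= l -> l <> ln (1 + / k) ->
  H l k k < H (ln (1 + / k)) k k.
Proof.
intros hk hl hne.
assert (hk' : 0 < 1 + / k) by (assert (0 < / k) by (apply Rinv_0_lt_compat; lra); lra).
apply (strict_max (fun l => H l k k) (dH k) 0 (ln (1 + / k))); auto.
- intros x. apply H_derive.
- intros x [h1 h2]. apply dH_pos; auto. rewrite <- (exp_ln (1 + /k)) by lra.
  apply exp_increasing; auto.
- intros x hx. apply dH_neg; auto. rewrite <- (exp_ln (1 + /k)) by lra.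
  apply exp_increasing; auto.
- apply dH_zero; auto.
Qed.

Definition phi k := 6 * ln (1 + / k) + (1 + / k) - / (1 + / k).

Lemma H_val k : 0 < k -> 9 * H (ln (1 + / k)) k k = phi k.
Proof.
intros hk.
assert (hk' : 0 < 1 + / k) by (assert (0 < / k) by (apply Rinv_0_lt_compat; lra); lra).
unfold H, Gp, s, S1, S2, sinh, cosh, phi. rewrite exp_Ropp, exp_ln by lra.
field. lra.
Qed.
Lemma phi_conv u v : 0 < u -> 0 < v ->
  2 * phi (sqrt (u*v)) <= phi u + phi v /\ (u <> v -> 2 * phi (sqrt (u*v)) < phi u + phi v).
Proof.
intros hu hv.
rewrite sqrt_mult by lra.
pose proof (sqrt_sqrt u ltac:(lra)) as Hu. pose proof (sqrt_sqrt v ltac:(lra)) as Hv.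
pose proof (sqrt_lt_R0 u hu) as ha. pose proof (sqrt_lt_R0 v hv) as hb.
set (a := sqrt u) in *. set (b := sqrt v) in *. clearbody a b. subst u v.
assert (hab : 0 < a * b) by nra.
assert (hl : 2 * ln (1 + / (a*b)) <= ln (1 + / (a*a)) + ln (1 + / (b*b))).
{ rewrite <- ln_mult.
  2,3: assert (0 < / (a*a)) by (apply Rinv_0_lt_compat; nra);
       assert (0 < / (b*b)) by (apply Rinv_0_lt_compat; nra); lra.
  replace (2 * ln (1 + / (a*b))) with (ln ((1 + / (a*b)) * (1 + / (a*b)))).
  2:{ assert (0 < / (a*b)) by (apply Rinv_0_lt_compat; nra). rewrite ln_mult by lra. ring. }
  apply ln_le. assert (0 < / (a*b)) by (apply Rinv_0_lt_compat; nra). nra.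
  assert (hd : (1 + / (a * a)) * (1 + / (b * b)) - (1 + / (a * b)) * (1 + / (a * b))
    = (a-b)^2 / (a*a*b*b)) by (field; lra).
  assert (0 <= (a-b)^2 / (a*a*b*b)).
  { apply Rmult_le_pos. apply pow2_ge_0. left; apply Rinv_0_lt_compat. nra. }
  lra. }
set (N := 2*(a*a*b*b*(a*b)) + a*a*a*b + a*a + a*b*b*b + b*b + a*b + 1).
assert (hN : 0 < N).
{ unfold N. assert (0 < a*a*b*b*(a*b)) by (repeat apply Rmult_lt_0_compat; lra).
  assert (0 < a*a*a*b) by (repeat apply Rmult_lt_0_compat; lra).
  assert (0 < a*b*b*b) by (repeat apply Rmult_lt_0_compat; lra). nra. }
assert (hr : (1 + / (a*a) - / (1 + / (a*a))) + (1 + / (b*b) - / (1 + / (b*b)))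
   - 2 * (1 + / (a*b) - / (1 + / (a*b)))
   = (a-b)^2 * N / (a*a*b*b*((a*a+1)*(b*b+1)*(a*b+1)))).
{ unfold N. field. repeat split; nra. }
assert (hD : 0 < a*a*b*b*((a*a+1)*(b*b+1)*(a*b+1))) by
  (repeat apply Rmult_lt_0_compat; nra).
unfold phi. split.
- assert (0 <= (a-b)^2 * N / (a*a*b*b*((a*a+1)*(b*b+1)*(a*b+1)))).
  { apply Rmult_le_pos. apply Rmult_le_pos. apply pow2_ge_0. lra. left; apply Rinv_0_lt_compat; lra. }
  lra.
- intros hne. assert (a <> b) by (intro; subst; apply hne; reflexivity).
  assert (0 < (a-b)^2 * N / (a*a*b*b*((a*a+1)*(b*b+1)*(a*b+1)))).
  { apply Rmult_lt_0_compat. apply Rmult_lt_0_compat. assert (a - b <> 0) by lra.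
    replace ((a-b)^2) with (Rsqr (a-b)) by (unfold Rsqr; ring). apply Rsqr_pos_lt; auto. lra.
    apply Rinv_0_lt_compat; lra. }
  lra.
Qed.
Lemma tanh_bounds r : 0 < r -> 0 < tanh r < 1.
Proof.
intros hr. assert (hE : 1 < exp r) by (rewrite <- exp_0; apply exp_increasing; lra).
assert (tanh r = (exp r * exp r - 1) / (exp r * exp r + 1)).
{ unfold tanh, sinh, cosh. rewrite exp_Ropp. field. split; nra. }
rewrite H0. split.
- apply Rmult_lt_0_compat. nra. apply Rinv_0_lt_compat. nra.
- apply (Rmult_lt_reg_r (exp r * exp r + 1)). nra. unfold Rdiv. rewrite Rmult_assoc, Rinv_l by nra. nra.
Qed.

Lemma lub_max (E : R -> Prop) m : E m -> (forall y, E y -> y <= m) -> real (Lub_Rbar E) = m.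
Proof.
intros hm hub. destruct (Lub_Rbar_correct E) as [ub lst].
assert (h1 : Rbar_le m (Lub_Rbar E)) by (apply ub; auto).
assert (h2 : Rbar_le (Lub_Rbar E) m) by (apply lst; intros y hy; simpl; apply hub; auto).
destruct (Lub_Rbar E); simpl in *; try contradiction. lra.
Qed.

Lemma lub_le (E : R -> Prop) M y0 : E y0 -> (forall y, E y -> y <= M) -> real (Lub_Rbar E) <= M.
Proof.
intros hm hub. destruct (Lub_Rbar_correct E) as [ub lst].
assert (h1 : Rbar_le y0 (Lub_Rbar E)) by (apply ub; auto).
assert (h2 : Rbar_le (Lub_Rbar E) M) by (apply lst; intros y hy; simpl; apply hub; auto).
destruct (Lub_Rbar E); simpl in *; try contradiction. auto.
Qed.

Definition ua r a := (1 - tanh r * cos a) / (2 * (tanh r * cos a)).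

Lemma x_bounds r a : 0 < r -> 0 <= a < PI / 2 -> 0 < tanh r * cos a < 1.
Proof.
intros hr ha. destruct (tanh_bounds r hr).
assert (0 < cos a) by (apply cos_gt_0; lra).
assert (cos a <= 1) by (apply COS_bound).
split. apply Rmult_lt_0_compat; lra. nra.
Qed.

Lemma ua_pos r a : 0 < r -> 0 <= a < PI / 2 -> 0 < ua r a.
Proof.
intros hr ha. destruct (x_bounds r a hr ha). unfold ua.
apply Rmult_lt_0_compat. lra. apply Rinv_0_lt_compat. lra.
Qed.

Lemma gfun_eq r l a b : 0 < r -> 0 <= a < PI / 2 -> 0 <= b < PI / 2 ->
  gfun r l a b = H l (ua r a) (ua r b).
Proof.
intros hr ha hb. destruct (x_bounds r a hr ha). destruct (x_bounds r b hr hb).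
destruct (tanh_bounds r hr).
assert (cos a <> 0) by (intro e; rewrite e in *; lra).
assert (cos b <> 0) by (intro e; rewrite e in *; lra).
unfold gfun, H, Gp, ua. rewrite s_m1_eq, s_m2_eq. field. repeat split; lra.
Qed.

Lemma fsup_diag r a : 0 < r -> 0 <= a < PI / 2 -> fsup r a a = phi (ua r a) / 9.
Proof.
intros hr ha. pose proof (ua_pos r a hr ha) as hu.
unfold fsup. apply lub_max.
- exists (ln (1 + / ua r a)). split. left; apply l0_pos; auto.
  rewrite gfun_eq by auto. rewrite <- H_val by auto. field.
- intros y [l [hl ->]]. rewrite gfun_eq by auto.
  apply Rle_trans with (H (ln (1 + / ua r a)) (ua r a) (ua r a)).
  destruct (Req_dec l (ln (1 + / ua r a))) as [->|ne]. lra. left; apply H_max; auto.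
  rewrite <- H_val by auto. lra.
Qed.

Lemma fsup_bound r a b : 0 < r -> 0 <= a < PI / 2 -> 0 <= b < PI / 2 ->
  fsup r a b <= phi (sqrt (ua r a * ua r b)) / 9.
Proof.
intros hr ha hb. pose proof (ua_pos r a hr ha). pose proof (ua_pos r b hr hb).
set (k := sqrt (ua r a * ua r b)).
assert (hk : 0 < k) by (apply sqrt_lt_R0; nra).
unfold fsup. apply lub_le with (gfun r 0 a b).
- exists 0. split; auto; lra.
- intros y [l [hl ->]]. rewrite gfun_eq by auto.
  apply Rle_trans with (H l k k). apply H_amgm; auto.
  apply Rle_trans with (H (ln (1 + / k)) k k).
  destruct (Req_dec l (ln (1 + / k))) as [->|ne]. lra. left; apply H_max; auto.
  rewrite <- H_val by auto. lra.
Qed.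

Theorem lemma5 (r : R) (hr : 0 < r) :
  (forall a, 0 <= a < PI / 2 ->
     let l0 := 2 * artanh (tanh r * cos a) in
     0 <= l0 /\
     forall l, 0 <= l -> l <> l0 -> gfun r l a a < gfun r l0 a a)
  /\
  (forall a b, 0 <= a < PI / 2 -> 0 <= b < PI / 2 ->
     fsup r a b <= / 2 * (fsup r a a + fsup r b b) /\
     (fsup r a b = / 2 * (fsup r a a + fsup r b b) -> a = b)).
Proof.
split.
- intros a ha l0. pose proof (ua_pos r a hr ha) as hu. destruct (x_bounds r a hr ha).
  assert (hl0 : l0 = ln (1 + / ua r a)).
  { unfold l0, artanh. replace ((1 + tanh r * cos a) / (1 - tanh r * cos a)) with (1 + / ua r a).
    field. unfold ua. destruct (tanh_bounds r hr). assert (0 < cos a) by (apply cos_gt_0; lra).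
    field. repeat split; lra. }
  rewrite hl0. split. left; apply l0_pos; auto.
  intros l hl hne. rewrite !gfun_eq by auto. apply H_max; auto.
- intros a b ha hb.
  pose proof (ua_pos r a hr ha). pose proof (ua_pos r b hr hb).
  rewrite (fsup_diag r a), (fsup_diag r b) by auto.
  pose proof (fsup_bound r a b hr ha hb).
  destruct (phi_conv (ua r a) (ua r b)) as [c1 c2]; auto.
  split. lra.
  intros heq. destruct (Req_dec a b) as [e|ne]; auto. exfalso.
  assert (hne : ua r a <> ua r b).
  { intro e. apply ne. destruct (x_bounds r a hr ha). destruct (x_bounds r b hr hb).
    destruct (tanh_bounds r hr). assert (0 < cos a) by (apply cos_gt_0; lra).
    assert (0 < cos b) by (apply cos_gt_0; lra).
    assert (ex : tanh r * cos a = tanh r * cos b).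
    { unfold ua in e.
      assert (e2 : (1 - tanh r * cos a) * (tanh r * cos b) = (1 - tanh r * cos b) * (tanh r * cos a)).
      { apply (Rmult_eq_reg_r (/ (2 * (tanh r * cos a) * (tanh r * cos b)))).
        2: { apply Rinv_neq_0_compat. nra. }
        replace ((1 - tanh r * cos a) * (tanh r * cos b) * / (2 * (tanh r * cos a) * (tanh r * cos b)))
          with ((1 - tanh r * cos a) / (2 * (tanh r * cos a))) by (field; repeat split; lra).
        rewrite e. field. repeat split; lra. }
      nra. }
    apply Rmult_eq_reg_l in ex; [|lra].
    apply cos_inj; auto; pose proof PI_RGT_0; lra. }
  specialize (c2 hne). lra.
Qed.
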